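(* Let $N$ be a natural number, $A\subseteq{}^N2$ and $k\geq 1$ with $\|A\|_4=k+1>1$. Then \[|A|\geq 2^N-\sum_{j=1}^{\lfloor N/k\rfloor}(-1)^{j-1}\binom{\lfloor N/k\rfloor}{j}2^{N-jk}.\]
   Context: $N=\{0,\ldots,N-1\}$; ${}^N2$ is the set of all functions $N\to\{0,1\}$ and ${}^{\underline N}2$ the set of partial functions $\sigma$ with $\mathrm{dom}(\sigma)\subseteq N$ and values in $\{0,1\}$ (empty function included); for $\sigma\in{}^{\underline N}2$, $[\sigma]=\{f\in{}^N2:\sigma\subseteq f\}$. For $A\subseteq{}^N2$, $\Delta(A)=\{\sigma\in{}^{\underline N}2:[\sigma]\cap A=\emptyset\text{ and }[\rho]\cap A\neq\emptyset\text{ for all }\rho\subsetneq\sigma\}$. For $\delta_1,\delta_2\subseteq{}^{\underline N}2$, $\delta_1\preceq\delta_2$ means every $\sigma\in\delta_1$ has some $\rho\in\delta_2$ with $\rho\subseteq\sigma$. For $\delta\subseteq{}^{\underline N}2$, $\mathrm{hn}(\delta)$ is the maximum of $k+1$ over those $k\in\{0,\ldots,N-1\}$ such that for every $\delta'\subseteq\delta$ there is $\delta''\subseteq\delta'$ whose elements have pairwise disjoint domains and $|\bigcup_{\sigma\in\delta''}\mathrm{dom}(\sigma)|\geq k|\delta'|$; $\mathrm{HN}(\delta)=\max\{\mathrm{hn}(\delta'):\delta\preceq\delta'\}$; and $\|A\|_4=\mathrm{HN}(\Delta(A))$. *)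

(* Defs.v *)
From mathcomp Require Import all_boot all_order all_algebra.
Set Implicit Arguments. Unset Strict Implicit. Unset Printing Implicit Defensive.

(* Total functions N -> {0,1} : {ffun 'I_N -> bool}.
   Partial functions N -> {0,1} : {ffun 'I_N -> option bool}
   (None = undefined at that point; the everywhere-None function is the empty function). *)
Definition tfun (N : nat) := {ffun 'I_N -> bool}.
Definition pfun (N : nat) := {ffun 'I_N -> option bool}.

Definition pdom N (s : pfun N) : {set 'I_N} := [set i | s i != None].

Definition pfsub N (r s : pfun N) : bool := [forall i, (r i == None) || (r i == s i)].

Definition cyl N (s : pfun N) : {set tfun N} :=
  [set f : tfun N | [forall i, if s i is Some b then f i == b else true]].

Definition Delta N (A : {set tfun N}) : {set pfun N} :=
  [set s : pfun N | [disjoint cyl s & A] &&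
     [forall r : pfun N, (pfsub r s && (r != s)) ==> ~~ [disjoint cyl r & A]]].

Definition preceq N (d1 d2 : {set pfun N}) : bool :=
  [forall s in d1, exists r in d2, pfsub r s].

Definition hn_prop N (d : {set pfun N}) (k : nat) : bool :=
  [forall d1 : {set pfun N}, (d1 \subset d) ==>
     [exists d2 : {set pfun N}, [&& d2 \subset d1,
        [forall s in d2, forall t in d2, (s != t) ==> [disjoint pdom s & pdom t]] &
        k * #|d1| <= #|\bigcup_(s in d2) pdom s| ]]].

(* hn(delta) = max { k+1 : k in {0,...,N-1}, hn_prop k } (0 if no such k, i.e. N = 0) *)
Definition hn N (d : {set pfun N}) : nat := \max_(k < N | hn_prop d k) k.+1.

Definition HN N (d : {set pfun N}) : nat := \max_(d' : {set pfun N} | preceq d d') hn d'.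

Definition norm4 N (A : {set tfun N}) : nat := HN (Delta A).

(* Main.v *)
Require Import Defs.
From mathcomp Require Import all_boot all_order all_algebra.
From mathcomp Require Import ring zify.
Set Implicit Arguments. Unset Strict Implicit. Unset Printing Implicit Defensive.
Import GRing.Theory Num.Theory.

Lemma cardsU_le (T : finType) (A B : {set T}) : #|A :|: B| <= #|A| + #|B|.
Proof. by rewrite -cardsUI leq_addr. Qed.

Lemma hall (T1 T2 : finType) (y0 : T2) (L : {set T1}) (e : T1 -> {set T2}) :
  (forall S : {set T1}, S \subset L -> #|S| <= #|\bigcup_(x in S) e x|) ->
  exists f : T1 -> T2, {in L, forall x, f x \in e x} /\ {in L &, injective f}.
Proof.
have [n] := ubnP #|L|; elim: n L e => // n IH L e /ltnSE leLn hallL.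
case: (set_0Vmem L) => [-> | [a aL]].
  by exists (fun _ => y0); split => x; rewrite inE.
case: (boolP [exists S : {set T1}, [&& S \subset L :\ a, S != set0 &
          #|\bigcup_(x in S) e x| <= #|S|]]).
- case/existsP => S /and3P [sSL nS0 cardS].
  have sSL' : S \subset L by apply: subset_trans sSL (subsetDl _ _).
  have ltS : #|S| < #|L|.
    rewrite (cardsD1 a L) aL add1n ltnS subset_leq_card //.
  have [f1 [f1e f1i]] : exists f : T1 -> T2, {in S, forall x, f x \in e x} /\ {in S &, injective f}.
    apply: IH; first by apply: leq_trans ltS leLn.
    by move=> S' sS'; apply: hallL; apply: subset_trans sS' sSL'.
  set NS := \bigcup_(x in S) e x.
  have [f2 [f2e f2i]] : exists f : T1 -> T2, {in L :\: S, forall x, f x \in e x :\: NS} /\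
       {in L :\: S &, injective f}.
    apply: IH.
      apply: (leq_trans _ leLn).
      by rewrite -(cardsID S L) (setIidPr sSL') -add1n leq_add2r lt0n cards_eq0.
    move=> S2 sS2.
    have dS : [disjoint S & S2].
      rewrite -setI_eq0; apply/eqP/setP => x; rewrite !inE.
      by apply/negP => /andP [xS /(subsetP sS2)]; rewrite inE xS.
    have := hallL (S :|: S2).
    rewrite subUset sSL' (subset_trans sS2 (subsetDl _ _)) => /(_ isT).
    rewrite cardsU (disjoint_setI0 dS) cards0 subn0 => H.
    have : #|S| + #|S2| <= #|NS| + #|\bigcup_(x in S2) (e x :\: NS)|.
      apply: (leq_trans H); apply: leq_trans (cardsU_le _ _).
      apply: subset_leq_card; apply/subsetP => y /bigcupP [x].
      rewrite inE => /orP [xS yex|xS2 yex]; rewrite inE.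
        by apply/orP; left; apply/bigcupP; exists x.
      case: (boolP (y \in NS)) => //= yNS.
      by apply/bigcupP; exists x; rewrite // inE yNS.
    move=> H2; rewrite -(leq_add2l #|S|); apply: leq_trans H2 _.
    by rewrite leq_add2r.
  exists (fun x => if x \in S then f1 x else f2 x); split.
    move=> x xL /=; case: ifP => xS; first exact: f1e.
    by have /setDP [] := f2e x ltac:(by rewrite inE xS xL).
  move=> x y xL yL /=.
  case: ifP => xS; case: ifP => yS.
  + exact: f1i.
  + move=> E; have /setDP [_] := f2e y ltac:(by rewrite inE yS yL).
    by rewrite -E; case/negP; apply/bigcupP; exists x => //; apply: f1e.
  + move=> E; have /setDP [_] := f2e x ltac:(by rewrite inE xS xL).
    by rewrite E; case/negP; apply/bigcupP; exists y => //; apply: f1e.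
  + by apply: f2i; rewrite inE ?xS ?yS.
- rewrite negb_exists => /forallP H.
  have : 0 < #|e a|.
    have := hallL [set a]; rewrite sub1set aL cards1 big_set1; exact.
  rewrite card_gt0 => /set0Pn [b bea].
  have [f1 [f1e f1i]] : exists f : T1 -> T2, {in L :\ a, forall x, f x \in e x :\ b} /\
       {in L :\ a &, injective f}.
    apply: IH.
      apply: (leq_trans _ leLn).
      by rewrite (cardsD1 a L) aL.
    move=> S sS; case: (set_0Vmem S) => [->|[x xS]]; first by rewrite cards0.
    have := H S; rewrite sS /= => HS.
    have nS0 : S != set0 by apply/set0Pn; exists x.
    rewrite nS0 /= -ltnNge in HS.
    rewrite -ltnS; apply: leq_trans HS _.
    rewrite -add1n -(cards1 b); apply: leq_trans (cardsU_le _ _).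
    apply: subset_leq_card; apply/subsetP => y /bigcupP [z zS yez].
    rewrite !inE; case: (boolP (y == b)) => //= ynb; apply/bigcupP; exists z => //.
    by rewrite !inE yez ynb.
  exists (fun x => if x == a then b else f1 x); split.
    move=> x xL /=; case: eqP => [->//|/eqP xa].
    by have /setD1P [] := f1e x ltac:(by rewrite !inE xa xL).
  move=> x y xL yL /=.
  case: eqP => [->|/eqP xa]; case: eqP => [->//|/eqP ya].
  + move=> E; have /setD1P [] := f1e y ltac:(by rewrite !inE ya yL).
    by rewrite -E eqxx.
  + move=> E; have /setD1P [] := f1e x ltac:(by rewrite !inE xa xL).
    by rewrite E eqxx.
  + by apply: f1i; rewrite !inE ?xa ?ya.
Qed.

Definition flipf N (x : 'I_N) (g : tfun N) : tfun N :=
  [ffun i => if i == x then ~~ g i else g i].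

Lemma flipfK N (x : 'I_N) : involutive (flipf x).
Proof. by move=> g; apply/ffunP => i; rewrite !ffunE; case: eqP => // _; rewrite negbK. Qed.

Lemma in_cyl N (t : pfun N) (g : tfun N) :
  (g \in cyl t) = [forall i, if t i is Some b then g i == b else true].
Proof. by rewrite inE. Qed.

Lemma cyl_flip N (t : pfun N) (x : 'I_N) (g : tfun N) : x \notin pdom t ->
  (flipf x g \in cyl t) = (g \in cyl t).
Proof.
rewrite inE negbK => /eqP tx; rewrite !in_cyl.
apply/forallP/forallP => H i; have := H i; rewrite ffunE;
  case: eqP => [->|//]; by rewrite tx.
Qed.

Lemma half_count N (X : {set tfun N}) (x : 'I_N) (b : bool) :
  (forall g, (flipf x g \in X) = (g \in X)) ->
  2 * #|X :&: [set g : tfun N | g x == b]| = #|X|.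
Proof.
move=> inv.
set P := [set g : tfun N | g x == b].
have im1 : flipf x @: (X :&: P) \subset X :\: P.
  apply/subsetP => g /imsetP [h]; rewrite !inE => /andP [hX /eqP hb] ->.
  by rewrite inv hX ffunE eqxx hb; case: (b).
have im2 : flipf x @: (X :\: P) \subset X :&: P.
  apply/subsetP => g /imsetP [h]; rewrite !inE => /andP [hb hX] ->.
  rewrite inv hX ffunE eqxx /=; move: hb; by case: (h x); case: (b).
have e1 := subset_leq_card im1; have e2 := subset_leq_card im2.
rewrite !(card_imset _ (can_inj (flipfK x))) in e1 e2.
rewrite -(cardsID P X) mul2n -addnn; congr (_ + _).
by apply/eqP; rewrite eqn_leq e1 e2.
Qed.

Lemma count_cyl N (t : pfun N) (X : {set tfun N}) :
  (forall x g, x \in pdom t -> (flipf x g \in X) = (g \in X)) ->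
  2 ^ #|pdom t| * #|X :&: cyl t| = #|X|.
Proof.
have [n] := ubnP #|pdom t|; elim: n t X => // n IH t X /ltnSE lt inv.
case: (set_0Vmem (pdom t)) => [E|[x xt]].
  rewrite E cards0 mul1n (setIidPl _) //; apply/subsetP => g _.
  rewrite in_cyl; apply/forallP => i; have : i \notin pdom t by rewrite E inE.
  by rewrite inE negbK => /eqP ->.
have [b tb] : exists b, t x = Some b.
  by move: xt; rewrite inE; case: (t x) => // b _; exists b.
set t' : pfun N := [ffun i => if i == x then None else t i].
have dt' : pdom t' = pdom t :\ x.
  by apply/setP => i; rewrite !inE ffunE; case: (i == x).
have ct : cyl t = cyl t' :&: [set g : tfun N | g x == b].
  apply/setP => g; rewrite !inE; apply/forallP/andP.
    move=> H; split; last by have := H x; rewrite tb.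
    by apply/forallP => i; rewrite ffunE; case: eqP => // _; apply: H.
  case=> /forallP H gb i; have := H i; rewrite ffunE; case: eqP => [->|//].
  by rewrite tb.
set X' := X :&: [set g : tfun N | g x == b].
have e1 : X :&: cyl t = X' :&: cyl t' by rewrite ct /X' setIA setIAC.
have hx : #|pdom t| = #|pdom t'|.+1 by rewrite dt' (cardsD1 x (pdom t)) xt.
have IH' := IH t' X'.
rewrite hx e1 expnS -mulnA IH'; last first.
- move=> y g; rewrite dt' => /setD1P [yx yt]; rewrite !inE inv //.
  by rewrite ffunE (eq_sym x) (negbTE yx).
- by rewrite -ltnS -hx.
by apply: half_count => g; apply: inv.
Qed.

Definition avoid N (l : seq (pfun N)) : {set tfun N} :=
  [set g | all (fun t => g \notin cyl t) l].

Fixpoint pdisj N (l : seq (pfun N)) : bool :=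
  if l is s :: l' then all (fun t => [disjoint pdom s & pdom t]) l' && pdisj l'
  else true.

Lemma count_avoid N k (l : seq (pfun N)) : pdisj l ->
  all (fun t => #|pdom t| == k) l ->
  2 ^ (k * size l) * #|avoid l| = (2 ^ k - 1) ^ size l * 2 ^ N.
Proof.
elim: l => [|s l IH] /=.
  move=> _ _; rewrite muln0 !expn0 !mul1n.
  have -> : avoid (N:=N) [::] = [set: tfun N] by apply/setP => g; rewrite !inE.
  by rewrite cardsT card_ffun card_bool card_ord.
case/andP => ds dl /andP [/eqP ks kl].
have e1 : avoid (s :: l) = avoid l :\: cyl s.
  by apply/setP => g; rewrite inE /= !inE.
have cc : 2 ^ k * #|avoid l :&: cyl s| = #|avoid l|.
  rewrite -ks; apply: count_cyl => x g xs; rewrite !inE.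
  apply: eq_in_all => t tl /=; rewrite cyl_flip //.
  have := allP ds t tl; rewrite disjoint_sym => /disjointFl/(_ xs) ->; done.
have c2 : 2 ^ k * #|avoid (s :: l)| = (2 ^ k - 1) * #|avoid l|.
  have h := cardsID (cyl s) (avoid l).
  rewrite e1 mulnBl mul1n -h mulnDr cc -h.
  by rewrite addKn.
by rewrite mulnS expnD mulnAC c2 mulnAC -mulnA IH // expnS mulnA.
Qed.

Lemma pfsubP N (r s : pfun N) :
  reflect (forall i, r i = None \/ r i = s i) (pfsub r s).
Proof.
apply: (iffP forallP) => H i; first by have /orP [/eqP|/eqP] := H i; auto.
by case: (H i) => ->; rewrite eqxx ?orbT.
Qed.

Lemma pfsub_refl N (s : pfun N) : pfsub s s.
Proof. by apply/pfsubP; auto. Qed.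

Lemma pfsub_trans N (r s t : pfun N) : pfsub r s -> pfsub s t -> pfsub r t.
Proof.
move=> /pfsubP H1 /pfsubP H2; apply/pfsubP => i.
case: (H1 i) => ->; auto; case: (H2 i) => ->; auto.
Qed.

Lemma pfsub_cyl N (r s : pfun N) g : pfsub r s -> g \in cyl s -> g \in cyl r.
Proof.
move=> /pfsubP H; rewrite !in_cyl => /forallP H2; apply/forallP => i.
by case: (H i) => ->.
Qed.

Lemma pfsub_lt N (r s : pfun N) : pfsub r s -> r != s -> #|pdom r| < #|pdom s|.
Proof.
move=> /pfsubP H rs.
have sub : pdom r \subset pdom s.
  apply/subsetP => i; rewrite !inE; by case: (H i) => ->.
rewrite ltn_neqAle subset_leq_card // andbT.
apply: contra rs => /eqP eqc.
have /eqP eqd : pdom r == pdom s by rewrite eqEcard sub eqc leqnn.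
apply/eqP/ffunP => i; case: (H i) => // ri.
have : i \notin pdom s by rewrite -eqd inE ri.
by rewrite inE negbK ri => /eqP.
Qed.

Lemma notA_cyl N (A : {set tfun N}) (d : {set pfun N}) (g : tfun N) :
  preceq (Delta A) d -> g \notin A -> exists2 s, s \in d & g \in cyl s.
Proof.
move=> /forallP pre gA.
pose tot : pfun N := [ffun i => Some (g i)].
pose P (s : pfun N) := pfsub s tot && [disjoint cyl s & A].
have Ptot : P tot.
  rewrite /P pfsub_refl /=; apply/pred0P => h /=.
  apply/negP => /andP [hc hA].
  have hg : h = g.
    apply/ffunP => i; move: hc; rewrite in_cyl => /forallP/(_ i).
    by rewrite ffunE => /eqP.
  by move: gA; rewrite -hg hA.
case: (arg_minnP (fun s => #|pdom s|) Ptot) => s0 /andP [s0t s0A] mins.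
have s0D : s0 \in Delta A.
  rewrite inE s0A /=; apply/forallP => r; apply/implyP => /andP [rs rne].
  apply/negP => rA.
  have := mins r; rewrite /P (pfsub_trans rs s0t) rA => /(_ isT).
  by rewrite leqNgt pfsub_lt.
have /existsP [r /andP [rd rs0]] := implyP (pre s0) s0D.
exists r => //; apply: pfsub_cyl (pfsub_trans rs0 s0t) _.
by rewrite in_cyl; apply/forallP => i; rewrite ffunE.
Qed.

Local Open Scope ring_scope.
Lemma rhs_eq (N k m : nat) : (m * k <= N)%N ->
  (2 ^ N)%:Z - \sum_(1 <= j < m.+1)
        (-1) ^+ (j.-1) * ('C(m, j))%:Z * (2 ^ (N - j * k))%:Z
  = (2 ^ (N - m * k) * (2 ^ k - 1) ^ m)%N%:Z.
Proof.
move=> mkN.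
pose F (i : nat) : int := (-1) ^+ i * ('C(m, i))%:Z * (2 ^ (N - i * k))%:Z.
have L : (2 ^ N)%:Z - \sum_(1 <= j < m.+1)
        (-1) ^+ (j.-1) * ('C(m, j))%:Z * (2 ^ (N - j * k))%:Z = \sum_(i < m.+1) F i.
  rewrite big_ord_recl /F /= expr0 mul1r bin0 mul0n subn0 mul1r.
  rewrite big_add1 /= big_mkord -sumrN; congr (_ + _).
  by apply: eq_bigr => i _; rewrite /bump /= add1n exprS !mulN1r !mulNr.
rewrite L PoszM.
have -> : ((2 ^ k - 1) ^ m)%N%:Z = ((2 ^ k)%:Z + (-1)) ^+ m.
  rewrite -natz natrX natz subzn ?expn_gt0 //.
rewrite exprDn mulr_sumr; apply: eq_bigr => i _.
have im : (i <= m)%N by rewrite -ltnS.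
have e : (2 ^ (N - i * k) = 2 ^ (N - m * k) * (2 ^ k) ^ (m - i))%N.
  rewrite -expnM -expnD; congr (expn 2 _).
  have ikmk : (i * k <= m * k)%N by rewrite leq_mul2r im orbT.
  rewrite mulnBr [(k * m)%N]mulnC [(k * i)%N]mulnC.
  move: ikmk mkN; move: (i * k)%N (m * k)%N => a b; lia.
rewrite /F e PoszM -[((2 ^ k) ^ (m - i))%N%:Z]natz natrX natz -mulr_natr natz.
ring.
Qed.

Local Close Scope ring_scope.

Lemma bigmax_witness (I : finType) (P : pred I) (F : I -> nat) n :
  \max_(i | P i) F i = n.+1 -> exists2 i, P i & F i = n.+1.
Proof.
move=> E; case: (pickP P) => [x Px|P0]; last by rewrite big_pred0 in E.
have : 0 < #|P| by apply/card_gt0P; exists x.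
case/(eq_bigmax_cond F) => i Pi e; exists i => //; rewrite -e; exact: E.
Qed.

Lemma pdisj_map N (tau : pfun N -> pfun N) (l : seq (pfun N)) : uniq l ->
  {in l &, forall s t, s != t -> [disjoint pdom (tau s) & pdom (tau t)]} ->
  pdisj (map tau l).
Proof.
elim: l => //= s l IH /andP [sl ul] H; apply/andP; split.
  apply/allP => t' /mapP [t tl ->]; apply: H; rewrite ?inE ?eqxx ?tl ?orbT //.
  by apply/eqP => st; rewrite st tl in sl.
by apply: IH => // x y xl yl; apply: H; rewrite inE ?xl ?yl orbT.
Qed.

Local Open Scope ring_scope.

Theorem theorem6p33 (N : nat) (A : {set tfun N}) (k : nat) :
  (1 <= k)%N -> norm4 A = k.+1 -> (1 < k.+1)%N ->
  ((#|A| : nat)%:Z >=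
     (2 ^ N)%:Z -
     \sum_(1 <= j < (N %/ k).+1)
        (-1) ^+ (j.-1) * ('C(N %/ k, j))%:Z * (2 ^ (N - j * k))%:Z)%R.
Proof.
move=> k1 Hn _.
have [d' pre hnd] := bigmax_witness Hn.
have [k' hpk ek] := bigmax_witness hnd.
case: ek => ek; subst k.
set k := nat_of_ord k'.
have kN : (k < N)%N := ltn_ord k'.
have hp : forall d1 : {set pfun N}, d1 \subset d' -> (k * #|d1| <= #|\bigcup_(s in d1) pdom s|)%N.
  move=> d1 sd1; have /forallP/(_ d1) := hpk; rewrite sd1 /=.
  case/existsP => d2 /and3P [s21 _ le].
  apply: leq_trans le _; apply: subset_leq_card; apply/subsetP => x /bigcupP [s sd2 xs].
  by apply/bigcupP; exists s => //; apply: (subsetP s21).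
have N0 : (0 < N)%N by apply: leq_ltn_trans kN.
pose y0 : 'I_N := Ordinal N0.
have hallc : forall S : {set (pfun N * 'I_k)}, S \subset setX d' [set: 'I_k] ->
    (#|S| <= #|\bigcup_(x in S) pdom x.1|)%N.
  move=> S sS; set d1 := [set p.1 | p in S].
  have sd1 : d1 \subset d'.
    by apply/subsetP => s /imsetP [p pS ->]; have := subsetP sS p pS; rewrite inE => /andP [].
  apply: (@leq_trans #|setX d1 [set: 'I_k]|).
    apply: subset_leq_card; apply/subsetP => p pS; rewrite !inE andbT.
    exact: imset_f.
  rewrite cardsX cardsT card_ord mulnC; apply: leq_trans (hp d1 sd1) _.
  apply: subset_leq_card; apply/subsetP => x /bigcupP [s /imsetP [p pS ->] xs].
  by apply/bigcupP; exists p.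
have [f [fe fi]] := hall y0 hallc.
pose img (s : pfun N) := [set f (s, i) | i : 'I_k].
pose tau (s : pfun N) : pfun N := [ffun x => if x \in img s then s x else None].
have tau_sub : forall s, pfsub (tau s) s.
  by move=> s; apply/pfsubP => i; rewrite ffunE; case: ifP; auto.
have tau_dom : forall s, s \in d' -> pdom (tau s) = img s.
  move=> s sd; apply/setP => x; rewrite inE ffunE; case: ifP => // /imsetP [i _ ->].
  by have := fe (s, i); rewrite inE sd inE => /(_ isT); rewrite inE.
have tau_card : forall s, s \in d' -> #|pdom (tau s)| = k.
  move=> s sd; rewrite tau_dom // card_in_imset ?card_ord // => i j _ _ /= E.
  by have := fi (s, i) (s, j); rewrite !inE sd => /(_ isT isT E) [].
have tau_disj : {in enum d' &, forall s t, s != t ->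
    [disjoint pdom (tau s) & pdom (tau t)]}.
  move=> s t; rewrite !mem_enum => sd td st; rewrite tau_dom // tau_dom //.
  rewrite -setI_eq0; apply/eqP/setP => x; rewrite !inE.
  apply/negP => /andP [/imsetP [i _ ->] /imsetP [j _ E]].
  have := fi (s, i) (t, j); rewrite !inE sd td => /(_ isT isT E) [st'].
  by rewrite st' eqxx in st.
set l := map tau (enum d').
have allk : all (fun t => #|pdom t| == k) l.
  by apply/allP => t /mapP [s sd ->]; rewrite mem_enum in sd; rewrite tau_card.
have cnt := count_avoid (pdisj_map (enum_uniq (mem d')) tau_disj) allk.
rewrite size_map -cardE in cnt.
have avA : (#|avoid l| <= #|A|)%N.
  apply: subset_leq_card; apply/subsetP => g; rewrite inE => /allP gl.
  apply/negPn/negP => gA; have [s sd gs] := notA_cyl pre gA.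
  have := gl (tau s) (map_f tau (_ : s \in enum d')); rewrite mem_enum => /(_ sd).
  by rewrite (pfsub_cyl (tau_sub s) gs).
have kj : (#|d'| * k <= N)%N.
  rewrite mulnC; apply: leq_trans (hp d' (subxx _)) _.
  by apply: leq_trans (max_card _) _; rewrite card_ord.
set m := (N %/ k)%N.
have jm : (#|d'| <= m)%N by rewrite leq_divRL.
have mkN : (m * k <= N)%N by rewrite leq_divM.
rewrite rhs_eq // lez_nat.
set j := #|d'| in cnt jm kj.
set a := #|avoid l| in cnt avA.
set c := (2 ^ k - 1)%N in cnt *.
rewrite -(@leq_pmul2l (2 ^ (k * m))) ?expn_gt0 //.
rewrite mulnA -expnD [(k * m)%N]mulnC subnKC //.
have -> : (m * k = k * (m - j) + k * j)%N by rewrite -mulnDr subnK // mulnC.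
rewrite expnD -mulnA.
apply: (@leq_trans (2 ^ (k * (m - j)) * (2 ^ (k * j) * a))); last first.
  by rewrite leq_mul2l leq_mul2l avA !orbT.
rewrite cnt mulnA [X in (_ <= X)%N]mulnC leq_mul2l; apply/orP; right.
rewrite -{1}(subnK jm) expnD leq_mul2r; apply/orP; right.
case: (m - j)%N => [|e]; first by rewrite muln0 !expn0.
rewrite expnM leq_exp2r //.
by rewrite /c leq_subr.
Qed.
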